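(* Let $(X,\mathcal{R})$ be an association scheme with rank $d+1\geq 3$. If some relation $R\in\mathcal{R}$ has a connected scheme graph of valency three, then $(X,\mathcal{R})$ is partially metric with respect to $R$; that is, the set of pairs at distance $2$ in the scheme graph of $R$ is a single relation of $\mathcal{R}$.
   Context: A (symmetric) association scheme with rank $d+1$ on a finite set $X$ is a partition $\mathcal{R}=\{R_0,\dots,R_d\}$ of $X\times X$ with $R_0$ the diagonal, each $R_i$ symmetric, and numbers $p^h_{ij}$ such that for every $(x,y)\in R_h$ the number of $z$ with $(x,z)\in R_i$, $(z,y)\in R_j$ equals $p^h_{ij}$. The scheme graph of $R_i$ ($i>0$) is the graph on $X$ with $x\sim y$ iff $(x,y)\in R_i$. The scheme is partially metric with respect to a connected relation $R_1$ if the distance-$2$ relation of the scheme graph of $R_1$ is a relation of the scheme. *)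

(* Defs.v *)
From mathcomp Require Import all_boot.
Set Implicit Arguments. Unset Strict Implicit. Unset Printing Implicit Defensive.

(* A symmetric association scheme of rank d+1 on a finite set X is encoded by
   its "relation-index" map r : X -> X -> 'I_(d.+1): the pair (x,y) lies in
   R_(r x y). *)
Definition is_assoc_scheme (X : finType) (d : nat) (r : X -> X -> 'I_d.+1) : Prop :=
  [/\ forall i : 'I_d.+1, exists x y, r x y = i,
      forall x y, (r x y == ord0) = (x == y),
      forall x y, r x y = r y x &
      exists p : 'I_d.+1 -> 'I_d.+1 -> 'I_d.+1 -> nat,
        forall (h i j : 'I_d.+1) (x y : X), r x y = h ->
          #|[set z | (r x z == i) && (r z y == j)]| = p h i j].

Definition scheme_graph (X : finType) (d : nat) (r : X -> X -> 'I_d.+1)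
  (i : 'I_d.+1) : rel X := fun x y => r x y == i.

Definition connected_graph (X : finType) (e : rel X) : Prop :=
  forall x y, connect e x y.

Definition regular_of_valency (X : finType) (e : rel X) (k : nat) : Prop :=
  forall x, #|[set y | e x y]| = k.

Definition dist2 (X : finType) (e : rel X) (x y : X) : Prop :=
  x <> y /\ ~~ e x y /\ exists z, e x z && e z y.

Definition partially_metric (X : finType) (d : nat) (r : X -> X -> 'I_d.+1)
  (i : 'I_d.+1) : Prop :=
  exists h : 'I_d.+1, forall x y, dist2 (scheme_graph r i) x y <-> r x y = h.

(* Main.v *)
Require Import Defs.
From mathcomp Require Import all_boot.
Set Implicit Arguments. Unset Strict Implicit. Unset Printing Implicit Defensive.

Lemma card3P (T : finType) (a1 a2 a3 : T) (Q P : pred T) :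
  a1 != a2 -> a1 != a3 -> a2 != a3 ->
  (forall b, Q b = [|| b == a1, b == a2 | b == a3]) ->
  #|[set b | Q b && P b]| = P a1 + P a2 + P a3.
Proof.
move=> n12 n13 n23 HQ.
rewrite (cardsD1 a1) (cardsD1 a2 (_ :\ a1)) (cardsD1 a3 (_ :\ a1 :\ a2)).
have -> : [set b | Q b && P b] :\ a1 :\ a2 :\ a3 = set0.
  apply/setP=> b; rewrite !inE HQ.
  by case: (b == a1); case: (b == a2); case: (b == a3).
have n21 : (a2 == a1) = false by rewrite eq_sym (negbTE n12).
have n31 : (a3 == a1) = false by rewrite eq_sym (negbTE n13).
have n32 : (a3 == a2) = false by rewrite eq_sym (negbTE n23).
rewrite cards0 !inE !HQ !eqxx n21 n31 n32 (negbTE n12) (negbTE n13) (negbTE n23) /=.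
by rewrite addn0 !addnA.
Qed.

Lemma nbr3 (T : finType) (A : {set T}) : #|A| = 3 ->
  exists a1 a2 a3, [/\ a1 != a2, a1 != a3, a2 != a3 &
    forall b, (b \in A) = [|| b == a1, b == a2 | b == a3]].
Proof.
rewrite cardE => hs.
have hu := enum_uniq (pred_of_set A).
case E: (enum A) hs hu => [|a1 [|a2 [|a3 [|? ?]]]] //= _.
rewrite !inE !negb_or !andbT => /andP[/andP[n12 n13] n23].
exists a1, a2, a3; split => //.
by move=> b; rewrite -mem_enum E !inE.
Qed.
Theorem lemma2p3 (X : finType) (d : nat) (r : X -> X -> 'I_d.+1)
  (i : 'I_d.+1) :
  is_assoc_scheme r -> 2 <= d ->
  connected_graph (scheme_graph r i) ->
  regular_of_valency (scheme_graph r i) 3 ->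
  partially_metric r i.
Proof.
case=> Hex H0 Hsym [p Hp] d2 Hconn Hreg.
pose c h := p i i h.
have loc : forall y, exists g : 'I_d.+1,
   [/\ forall a b, r y a = i -> r y b = i -> a <> b -> r a b = g,
       forall h, c h = (ord0 == h) + (g == h) + (g == h) &
       exists a b, [/\ r y a = i, r y b = i & a <> b]].
  move=> y.
  have := Hreg y; rewrite /scheme_graph.
  case/nbr3 => a1 [a2 [a3 [n12 n13 n23 HN]]].
  have {}HN : forall b, (r y b == i) = [|| b == a1, b == a2 | b == a3] by move=> b; rewrite -HN inE.
  have cE : forall a h, r y a = i ->
      c h = (r a1 a == h) + (r a2 a == h) + (r a3 a == h).
    move=> a h Ha; rewrite /c -(Hp _ _ _ _ _ Ha).
    by apply: card3P.
  have A1 : r y a1 = i by apply/eqP; rewrite HN eqxx.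
  have A2 : r y a2 = i by apply/eqP; rewrite HN eqxx orbT.
  have A3 : r y a3 = i by apply/eqP; rewrite HN eqxx !orbT.
  have z1 : r a1 a1 = ord0 by apply/eqP; rewrite H0.
  have z2 : r a2 a2 = ord0 by apply/eqP; rewrite H0.
  have z3 : r a3 a3 = ord0 by apply/eqP; rewrite H0.
  have e1 := cE a1 _ A1; have e2 := cE a2 _ A2; have e3 := cE a3 _ A3.
  rewrite z1 in e1; rewrite z2 in e2; rewrite z3 in e3.
  rewrite (Hsym a1 a2) (Hsym a1 a3) (Hsym a2 a3) in e2 e3.
  have vw : r a3 a1 = r a3 a2.
    have := e1 (r a3 a1); rewrite e2 eqxx.
    by do ?case: eqP => //.
  have uw : r a2 a1 = r a3 a2.
    have := e1 (r a2 a1); rewrite e3 eqxx.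
    by do ?case: eqP => //.
  exists (r a2 a1); split.
  - move=> a b /eqP Ha /eqP Hb; move: Hb Ha; rewrite !HN.
    move=> /or3P [] /eqP -> /or3P [] /eqP -> nab;
    first [by case: nab | by rewrite ?uw ?vw ?(Hsym a1 a2) ?(Hsym a1 a3) ?(Hsym a2 a3) ?uw ?vw].
  - by move=> h; rewrite e1 vw uw.
  - by exists a1, a2; split => //; apply/eqP.
have [y0 _] : exists y0 : X, True by case: (Hex i) => x [y _]; exists x.
have [H [HH cH [a0 [b0 [Ha0 Hb0 nab0]]]]] := loc y0.
have Hall : forall y a b, r y a = i -> r y b = i -> a <> b -> r a b = H.
  move=> y a b Ha Hb nab.
  have [g [Hg cg _]] := loc y.
  rewrite (Hg a b Ha Hb nab).
  have := cH g; rewrite cg eqxx.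
  by do ?case: eqP => //.
have HnZ : H != ord0.
  by rewrite -(HH a0 b0 Ha0 Hb0 nab0) H0; apply/eqP.
case: (eqVneq H i) => [HI | HnI].
  exfalso.
  have cl : forall x w, connect (scheme_graph r i) x w -> w = x \/ r x w = i.
    move=> x w /connectP [q pq ->] {w}.
    elim/last_ind: q pq => [|q v IH]; first by left.
    rewrite rcons_path last_rcons => /andP [pq e]; rewrite /scheme_graph in e.
    case: (IH pq) => [E|E].
      by rewrite E in e; right; apply/eqP.
    case: (eqVneq v x) => [->|nvx]; first by left.
    right; rewrite -HI; apply: (Hall (last x q)) => //.
    - by rewrite Hsym.
    - exact/eqP.
    - by move=> exv; rewrite exv eqxx in nvx.
  have two : forall j : 'I_d.+1, j != ord0 -> j = i.
    move=> j nj; case: (Hex j) => x [z Hxz].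
    case: (cl x z (Hconn x z)) => [E|E]; last by rewrite -Hxz.
    by move: nj; rewrite -Hxz E; have := H0 x x; rewrite eqxx => /eqP ->.
  have l1 : 1 < d.+1 by apply: leqW.
  have l2 : 2 < d.+1 by [].
  have h1 : inord 1 != ord0 :> 'I_d.+1 by rewrite -val_eqE /= inordK.
  have h2 : inord 2 != ord0 :> 'I_d.+1 by rewrite -val_eqE /= inordK.
  have e := etrans (two _ h1) (esym (two _ h2)).
  by move/(congr1 val): e; rewrite /= !inordK.
exists H => x y; split.
  case=> nxy [ne [z /andP [e1 e2]]]; rewrite /scheme_graph in e1 e2.
  apply: (Hall z) => //; [by rewrite Hsym; apply/eqP | exact/eqP].
move=> Hxy; split; [|split].
- move=> exy; subst y; move: HnZ; rewrite -Hxy.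
  by have := H0 x x; rewrite eqxx => ->.
- by rewrite /scheme_graph Hxy.
- have := Hp _ i i _ _ Hxy; rewrite -(Hp _ i i _ _ (HH a0 b0 Ha0 Hb0 nab0)).
  have : y0 \in [set z | (r a0 z == i) && (r z b0 == i)].
    by rewrite inE Hsym Ha0 Hb0 eqxx.
  move=> Hin E.
  have : 0 < #|[set z | (r x z == i) && (r z y == i)]|.
    by rewrite E; apply/card_gt0P; exists y0.
  by case/card_gt0P => z; rewrite inE => ez; exists z.
Qed.
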